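(* Let $A$ be a unital $C^*$-algebra, let $P\in M_M(A)$ be a submagic matrix, let $K\ge0$ and $N=M+K$. If $P$ can be completed to a magic matrix $\widetilde P\in M_N(A)$ (i.e. one whose upper-left $M\times M$ block is $P$), then $\sum_{i,j=1}^M P_{ij}\ge (M-K)1$.
   Context: A submagic matrix over $A$ is a square matrix whose entries are orthogonal projections, pairwise orthogonal within each row and within each column; it is magic if moreover the entries in each row and each column sum to $1$. The inequality is in the order of self-adjoint elements of $A$. *)

(* Defs.v *)
From HB Require Import structures.
From mathcomp Require Import all_boot all_order all_algebra.
From mathcomp Require Import reals.
From mathcomp.real_closed Require Import complex.
Set Implicit Arguments. Unset Strict Implicit. Unset Printing Implicit Defensive.
Import Order.TTheory GRing.Theory Num.Theory.
Local Open Scope ring_scope.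

Definition unital_cstar_algebra (R : realType) (A : unitAlgType R[i])
    (star : A -> A) (nrm : A -> R) : Prop :=
  [/\
      [/\ (forall a, star (star a) = a),
          (forall a b, star (a + b) = star a + star b),
          (forall (c : R[i]) a, star (c *: a) = Num.conj c *: star a) &
          (forall a b, star (a * b) = star b * star a)],
      [/\ (forall a, 0 <= nrm a),
          (forall a, nrm a = 0 -> a = 0),
          (forall a b, nrm (a + b) <= nrm a + nrm b),
          (forall (c : R[i]) a, (nrm (c *: a))%:C%C = `|c| * (nrm a)%:C%C) &
          (forall a b, nrm (a * b) <= nrm a * nrm b)],
      (forall a, nrm (star a * a) = nrm a ^+ 2) &
      (forall u : nat -> A,
         (forall e : R, 0 < e -> exists N : nat, forall m n : nat,
            (N <= m)%N -> (N <= n)%N -> nrm (u m - u n) < e) ->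
         exists l : A, forall e : R, 0 < e -> exists N : nat, forall n : nat,
            (N <= n)%N -> nrm (u n - l) < e)].

Definition spectrum (R : realType) (A : unitAlgType R[i]) (a : A) : pred R[i] :=
  fun l => ~~ (a - l%:A \is a GRing.unit).

Definition cstar_pos (R : realType) (A : unitAlgType R[i]) (star : A -> A)
    (a : A) : Prop :=
  star a = a /\ forall l : R[i], l \in spectrum a -> (l \is Num.real) && (0 <= l).

Definition cstar_le (R : realType) (A : unitAlgType R[i]) (star : A -> A)
    (a b : A) : Prop :=
  [/\ star a = a, star b = b & cstar_pos star (b - a)].

Definition is_projection (R : realType) (A : unitAlgType R[i]) (star : A -> A)
    (p : A) : Prop :=
  p * p = p /\ star p = p.

Definition submagic (R : realType) (A : unitAlgType R[i]) (star : A -> A)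
    (n : nat) (P : 'M[A]_n) : Prop :=
  [/\ forall i j, is_projection star (P i j),
      forall i j k, j != k -> P i j * P i k = 0 &
      forall i k j, i != k -> P i j * P k j = 0].

Definition magic (R : realType) (A : unitAlgType R[i]) (star : A -> A)
    (n : nat) (P : 'M[A]_n) : Prop :=
  [/\ submagic star P,
      forall i, \sum_j P i j = 1 &
      forall j, \sum_i P i j = 1].

(* Main.v *)
Require Import Defs.
From HB Require Import structures.
From mathcomp Require Import all_boot all_order all_algebra.
From mathcomp Require Import reals.
From mathcomp.real_closed Require Import complex.
From mathcomp Require Import ring lra.
Import Order.TTheory GRing.Theory Num.Theory.
Local Open Scope ring_scope.

Lemma normC_real (R : realType) (x : R) : `|x%:C%C| = (`|x|)%:C%C.
Proof. by rewrite normc_def /= expr0n /= addr0 sqrtr_sqr. Qed.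


Lemma pow_small (R : realType) (r e : R) : 0 <= r -> r < 1 -> 0 < e ->
  exists N : nat, r ^+ N < e.
Proof.
move=> r0 r1 e0.
have [->|rn0] := eqVneq r 0; first by exists 1%N; rewrite expr1.
have rp : 0 < r by rewrite lt_def rn0.
set d := r^-1 - 1.
have dp : 0 < d by rewrite /d subr_gt0 invf_gt1.
have rd : r^-1 = 1 + d by rewrite /d addrC subrK.
have bern : forall n : nat, 1 + n%:R * d <= r^-1 ^+ n.
  rewrite rd; elim=> [|n ih]; first by rewrite mul0r addr0 expr0.
  rewrite exprS.
  have h0 : 0 <= n%:R * d by rewrite mulr_ge0 ?ler0n ?ltW.
  have d0 : 0 <= 1 + d by rewrite addr_ge0 ?ltW.
  apply: le_trans (ler_wpM2l d0 ih).
  rewrite -natr1 mulrDl mul1r; nra.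
have [N HN] : exists N : nat, (e * d)^-1 < N%:R.
  by exists (Num.Def.archi_bound (e * d)^-1); apply: archi_boundP; rewrite invr_ge0 mulr_ge0 ?ltW.
exists N.
have q0 : 0 < r^-1 ^+ N by rewrite exprn_gt0 // invr_gt0.
have hq : e^-1 < r^-1 ^+ N.
  apply: lt_le_trans (bern N).
  have : e^-1 < N%:R * d.
    rewrite -ltr_pdivrMr //. rewrite -invfM. exact HN.
  lra.
rewrite exprVn in hq q0.
rewrite -(invrK (r ^+ N)) -[e]invrK ltf_pV2 // posrE invr_gt0 //.
Qed.


Section CStar.
Variable R : realType.
Variable A : unitAlgType R[i].
Variable star : A -> A.
Variable nrm : A -> R.
Hypothesis starK : forall a, star (star a) = a.
Hypothesis starD : forall a b, star (a + b) = star a + star b.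
Hypothesis starZ : forall (c : R[i]) a, star (c *: a) = Num.conj c *: star a.
Hypothesis starM : forall a b, star (a * b) = star b * star a.
Hypothesis nrm_ge0 : forall a, 0 <= nrm a.
Hypothesis nrm_eq0 : forall a, nrm a = 0 -> a = 0.
Hypothesis nrmD : forall a b, nrm (a + b) <= nrm a + nrm b.
Hypothesis nrmZ : forall (c : R[i]) a, (nrm (c *: a))%:C%C = `|c| * (nrm a)%:C%C.
Hypothesis nrmM : forall a b, nrm (a * b) <= nrm a * nrm b.
Hypothesis nrmC : forall a, nrm (star a * a) = nrm a ^+ 2.
Hypothesis complete : forall u : nat -> A,
         (forall e : R, 0 < e -> exists N : nat, forall m n : nat,
            (N <= m)%N -> (N <= n)%N -> nrm (u m - u n) < e) ->
         exists l : A, forall e : R, 0 < e -> exists N : nat, forall n : nat,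
            (N <= n)%N -> nrm (u n - l) < e.

Lemma nrmZr (r : R) a : nrm (r%:C%C *: a) = `|r| * nrm a.
Proof. by apply: complexI; rewrite nrmZ normC_real rmorphM. Qed.

Lemma nrm0 : nrm 0 = 0.
Proof. by have := nrmZr 0 0; rewrite scale0r normr0 mul0r. Qed.

Lemma nrmN a : nrm (- a) = nrm a.
Proof. by have := nrmZr (-1) a; rewrite rmorphN1 scaleN1r normrN normr1 mul1r. Qed.

Lemma nrmB a b : nrm (a - b) = nrm (b - a).
Proof. by rewrite -nrmN opprB. Qed.

Lemma star0 : star 0 = 0.
Proof. by have := starD 0 0; rewrite addr0 => /eqP; rewrite -subr_eq subrr eq_sym => /eqP. Qed.

Lemma star1 : star 1 = 1.
Proof. by have := starM (star 1) 1; rewrite !(mulr1, starK). Qed.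

Lemma proj_le1 p : star p = p -> p * p = p -> nrm p <= 1.
Proof.
move=> sp pp; have := nrmC p; rewrite sp pp => e.
have [->|nz] := eqVneq (nrm p) 0; first by [].
have : nrm p * (nrm p - 1) = 0 by rewrite mulrBr mulr1 -expr2 -e subrr.
by move/eqP; rewrite mulf_eq0 (negbTE nz) subr_eq0 => /eqP ->.
Qed.

Lemma nrm1 : nrm 1 <= 1.
Proof. by apply: proj_le1; rewrite ?star1 ?mulr1. Qed.

Lemma nrm_sum (I : Type) (r : seq I) (P : pred I) (F : I -> A) :
  nrm (\sum_(i <- r | P i) F i) <= \sum_(i <- r | P i) nrm (F i).
Proof.
elim/big_rec2: _ => [|i y1 y2 _ h]; first by rewrite nrm0.
by apply: le_trans (nrmD _ _) _; rewrite lerD2l.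
Qed.

Lemma nrmX x k : nrm (x ^+ k) <= nrm x ^+ k.
Proof.
elim: k => [|k ih]; first by rewrite !expr0 nrm1.
rewrite !exprS; apply: le_trans (nrmM _ _) _.
by apply: ler_wpM2l => //.
Qed.

Lemma small_eq0 d : (forall e : R, 0 < e -> nrm d < e) -> d = 0.
Proof.
move=> h; apply: nrm_eq0; apply/eqP; rewrite eq_le nrm_ge0 andbT.
apply/contraT; rewrite -ltNge => hp.
by have := h _ hp; rewrite ltxx.
Qed.

Lemma neumann x : nrm x < 1 -> (1 - x) \is a GRing.unit.
Proof.
move=> x1; set r := nrm x.
have r0 : 0 <= r := nrm_ge0 x.
pose s n := \sum_(k < n) x ^+ k.
have tail : forall n m, (n <= m)%N -> nrm (s m - s n) <= r ^+ n / (1 - r).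
  move=> n m nm.
  have -> : s m - s n = \sum_(n <= k < m) x ^+ k.
    rewrite /s -!(big_mkord xpredT) (big_cat_nat (leq0n n) nm) /=.
    by rewrite addrC addrK.
  apply: le_trans (nrm_sum _ _ _ _) _.
  apply: le_trans (ler_sum _ (fun k _ => nrmX x k)) _.
  rewrite ler_pdivlMr ?subr_gt0 // mulr_suml.
  have -> : \sum_(n <= i < m) r ^+ i * (1 - r) = \sum_(n <= i < m) ((- r ^+ i.+1) - (- r ^+ i)).
    by apply: eq_bigr => i _; rewrite exprS; ring.
  rewrite telescope_sumr // opprK.
  have : 0 <= r ^+ m by rewrite exprn_ge0.
  lra.
have r1p : 0 < 1 - r by rewrite subr_gt0.
have powle : forall N n, (N <= n)%N -> r ^+ n <= r ^+ N.
  by move=> N n Nn; apply: ler_wiXn2l => //; apply: ltW.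
have [l hl] : exists l, forall e : R, 0 < e -> exists N : nat, forall n : nat,
            (N <= n)%N -> nrm (s n - l) < e.
  apply: complete => e e0.
  have [N HN] := @pow_small _ _ _ r0 x1 (mulr_gt0 e0 r1p).
  exists N => m n Nm Nn.
  have key : forall a b, (N <= a)%N -> (a <= b)%N -> nrm (s b - s a) < e.
    move=> a b Na ab; apply: le_lt_trans (tail _ _ ab) _.
    rewrite ltr_pdivrMr //; apply: le_lt_trans (powle _ _ Na) HN.
  have [nm|mn] := leqP n m; first exact: key.
  by rewrite nrmB; apply: key => //; apply: ltnW.
have tele1 : forall n, (1 - x) * s n = 1 - x ^+ n.
  elim=> [|n ih]; first by rewrite /s big_ord0 mulr0 expr0 subrr.
  by rewrite /s big_ord_recr /= mulrDr -/(s n) ih exprS mulrBl mul1r addrA subrK.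
have tele2 : forall n, s n * (1 - x) = 1 - x ^+ n.
  elim=> [|k ih]; first by rewrite /s big_ord0 mul0r expr0 subrr.
  by rewrite /s big_ord_recr /= mulrDl -/(s k) ih exprSr mulrBr mulr1 addrA subrK.
have fin : forall e (q p c : R), 0 < e -> 0 <= c -> 0 <= q ->
    q < e / 2 / (c + 1) -> p < e / 2 -> c * q + p < e.
  move=> e q p c e0 c0 q0; rewrite ltr_pdivlMr; last by lra.
  move=> hq hp; nra.
have zm : forall a b c : A, a - c = a - (c - b) - b.
  by move=> a b c; rewrite opprB addrA addrAC addrK.
have approx : forall e : R, 0 < e -> exists n,
    nrm (s n - l) < e / 2 / (nrm (1 - x) + 1) /\ nrm (x ^+ n) < e / 2.
  move=> e e0.
  have c0 := nrm_ge0 (1 - x).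
  have [N1 H1] := hl (e / 2 / (nrm (1 - x) + 1)) ltac:(apply: divr_gt0; lra).
  have [N2 H2] := @pow_small _ _ (e / 2) r0 x1 ltac:(lra).
  exists (maxn N1 N2); split; first by apply: H1; rewrite leq_maxl.
  apply: le_lt_trans (nrmX _ _) _; apply: le_lt_trans H2.
  by apply: powle; rewrite leq_maxr.
have close1 : (1 - x) * l = 1.
  apply/eqP; rewrite -subr_eq0; apply/eqP; apply: small_eq0 => e e0.
  have [n [h1 h2]] := approx e e0.
  rewrite (zm _ (x ^+ n)) -tele1 -mulrBr.
  apply: le_lt_trans (nrmD _ _) _; rewrite nrmN.
  have := nrmM (1 - x) (l - s n); rewrite nrmB => hm.
  have := fin e _ _ _ e0 (nrm_ge0 (1 - x)) (nrm_ge0 (s n - l)) h1 h2.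
  lra.
have close2 : l * (1 - x) = 1.
  apply/eqP; rewrite -subr_eq0; apply/eqP; apply: small_eq0 => e e0.
  have [n [h1 h2]] := approx e e0.
  rewrite (zm _ (x ^+ n)) -tele2 -mulrBl.
  apply: le_lt_trans (nrmD _ _) _; rewrite nrmN.
  have := nrmM (l - s n) (1 - x); rewrite nrmB => hm.
  have := fin e _ _ _ e0 (nrm_ge0 (1 - x)) (nrm_ge0 (s n - l)) h1 h2.
  rewrite mulrC in hm; lra.
by apply/unitrP; exists l.
Qed.
Lemma unit_of_norm a (c : R[i]) : (nrm a)%:C%C < `|c| -> (a - c%:A) \is a GRing.unit.
Proof.
move=> h.
have cn : `|c| != 0.
  by rewrite gt_eqF //; apply: le_lt_trans h; rewrite ler0c nrm_ge0.
have c0 : c != 0 by rewrite -normr_eq0.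
have -> : a - c%:A = - (c%:A * (1 - c^-1 *: a)).
  by rewrite mulrBr mulr1 mulr_algl scalerA divff // scale1r opprB.
rewrite unitrN unitrMl.
  apply/unitrP; exists (c^-1)%:A; rewrite !mulr_algl !scalerA.
  by rewrite mulVf // divff // scale1r.
apply: neumann; rewrite -ltcR nrmZ normfV rmorph1 mulrC ltr_pdivrMr ?mul1r //.
by rewrite lt_def cn normr_ge0.
Qed.

Lemma pos_of_bound h (n : nat) : star h = h -> nrm (n%:R - h) <= n%:R ->
  cstar_pos star h.
Proof.
move=> sh hn; split=> // l; rewrite unfold_in /spectrum => hl.
have [lr|lnr] := boolP (l \is Num.real).
  rewrite /=; apply/contraT; rewrite -real_ltNge ?real0 // => l0.
  suff : h - l%:A \is a GRing.unit by rewrite (negbTE hl).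
  have -> : h - l%:A = - ((n%:R - h) - ((n%:R : R[i]) - l)%:A).
    rewrite scalerBl scaler_nat.
    by rewrite opprB opprB [RHS]addrC addrA subrK.
  rewrite unitrN; apply: unit_of_norm.
  rewrite ger0_norm; last by rewrite subr_ge0; apply: le_trans (ltW l0) _; rewrite ler0n.
  apply: (@le_lt_trans _ _ (n%:R : R[i])).
    by rewrite -(rmorph_nat (real_complex R)) lecR.
  by rewrite ltrDl oppr_gt0.
exfalso; move/negP: hl; apply.
case: l lnr => x y; rewrite complex_real => yn0.
set t := (nrm h ^+ 2 + 1) / (2 * y).
set c1 : R[i] := (0 +i* t)%C.
have -> : h - (x +i* y)%C%:A = (h + c1%:A) - ((x +i* y)%C + c1)%:A.
  by rewrite scalerDl opprD addrACA subrr addr0.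
apply: unit_of_norm.
set a := h + c1%:A.
have conj1 : Num.conj c1 = - c1.
  by apply/eqP; rewrite eq_complex /= oppr0 !eqxx.
have sq1 : c1 * c1 = - (t ^+ 2)%:C%C.
  by apply/eqP; rewrite eq_complex /=; apply/andP; split; apply/eqP; ring.
have sa : star a * a = h * h + (t ^+ 2)%:C%C%:A.
  rewrite /a starD sh starZ star1 conj1 scaleNr mulrDr !mulrDl.
  rewrite mulr_algr !mulNr mulr_algl mulr_algl scalerA sq1 scaleNr opprK.
  by rewrite addrA subrK.
have na : nrm a ^+ 2 <= nrm h ^+ 2 + t ^+ 2.
  rewrite -nrmC sa; apply: le_trans (nrmD _ _) _.
  apply: lerD; first by rewrite expr2; apply: nrmM.
  rewrite nrmZr ger0_norm ?sqr_ge0 //.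
  by rewrite -{2}[t ^+ 2]mulr1; apply: ler_wpM2l; rewrite ?sqr_ge0 ?nrm1.
rewrite normc_def ltcR /=.
have yt : 2 * y * t = nrm h ^+ 2 + 1.
  by rewrite /t; field.
have hx := sqr_ge0 x; have hy := sqr_ge0 y.
rewrite -[nrm a]ger0_norm // -sqrtr_sqr ltr_sqrt; nra.
Qed.

End CStar.

Lemma zm3 (V : zmodType) (S C D : V) : S - ((S + C) - (C + D)) = D.
Proof. by rewrite addrKA subKr. Qed.

Lemma sum11 (V : pzRingType) (K : nat) :
  \sum_(i < K) \sum_(j < K) (1 : V) = (K * K)%:R.
Proof. by rewrite sumr_const card_ord sumr_const card_ord -mulrnA. Qed.

Theorem proposition3p3 (R : realType) (A : unitAlgType R[i])
    (star : A -> A) (nrm : A -> R) (HA : unital_cstar_algebra star nrm)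
    (M K : nat) (P : 'M[A]_M) (HP : submagic star P)
    (Pt : 'M[A]_(M + K)) (HPt : magic star Pt)
    (Hblock : forall i j : 'I_M, Pt (lshift K i) (lshift K j) = P i j) :
  cstar_le star ((M%:R - K%:R) * 1) (\sum_(i < M) \sum_(j < M) P i j).
Proof.
case: HA => [[starK starD starZ starM] [nrm_ge0 nrm_eq0 nrmD nrmZ nrmM] nrmC complete].
case: HPt => [[Hproj _ _] Hrow Hcol].
have star0' : star 0 = 0.
  by have := starD 0 0; rewrite addr0 => /eqP; rewrite -subr_eq subrr eq_sym => /eqP.
have starN : forall a, star (- a) = - star a.
  move=> a; apply/eqP; rewrite -addr_eq0 -starD addrC subrr star0'.
  done.
have star1' : star 1 = 1 by have := starM (star 1) 1; rewrite !(mulr1, starK).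
have starnat : forall n : nat, star n%:R = n%:R.
  by elim=> [|n ih]; rewrite ?star0' // mulrSr starD ih star1'.
have starsum : forall (I : Type) (r : seq I) (F : I -> A),
    star (\sum_(i <- r) F i) = \sum_(i <- r) star (F i).
  by move=> I r F; apply: (big_morph star starD star0').
have sym : forall i j, star (Pt i j) = Pt i j by move=> i j; case: (Hproj i j).
set S := \sum_(i < M) \sum_(j < M) P i j.
have SE : S = \sum_(i < M) \sum_(j < M) Pt (lshift K i) (lshift K j).
  by apply: eq_bigr => i _; apply: eq_bigr => j _; rewrite Hblock.
set C := \sum_(i < K) \sum_(j < M) Pt (rshift M i) (lshift K j).
set D := \sum_(i < K) \sum_(j < K) Pt (rshift M i) (rshift M j).
have hS : S + C = M%:R.
  have : \sum_(j < M) (\sum_(i < M) Pt (lshift K i) (lshift K j)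
                     + \sum_(i < K) Pt (rshift M i) (lshift K j)) = \sum_(j < M) (1 : A).
    by apply: eq_bigr => j _; rewrite -(Hcol (lshift K j)) big_split_ord.
  rewrite big_split sumr_const card_ord => <-.
  by rewrite SE /C [in RHS]exchange_big [X in _ + X = _]exchange_big.
have hD : C + D = K%:R.
  have : \sum_(i < K) (\sum_(j < M) Pt (rshift M i) (lshift K j)
                     + \sum_(j < K) Pt (rshift M i) (rshift M j)) = \sum_(i < K) (1 : A).
    by apply: eq_bigr => i _; rewrite -(Hrow (rshift M i)) big_split_ord.
  by rewrite big_split sumr_const card_ord.
have key : S - (M%:R - K%:R) * 1 = D by rewrite mulr1 -hS -hD zm3.
have starS : star S = S.
  by rewrite /S starsum; apply: eq_bigr => i _; rewrite starsum;
     apply: eq_bigr => j _; rewrite -Hblock sym.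
split.
- by rewrite mulr1 starD starN !starnat.
- exact: starS.
rewrite key.
apply: (@pos_of_bound _ _ _ _ starK starD starZ starM nrm_ge0 nrm_eq0 nrmD nrmZ nrmM nrmC
          complete _ (K * K)%N).
  by rewrite /D starsum; apply: eq_bigr => i _; rewrite starsum;
     apply: eq_bigr => j _; rewrite sym.
rewrite -(sum11 A) /D -sumrB.
apply: le_trans (@nrm_sum _ _ _ nrmD nrmZ _ _ _ _) _.
rewrite -(sum11 R); apply: ler_sum => i _.
rewrite -sumrB.
apply: le_trans (@nrm_sum _ _ _ nrmD nrmZ _ _ _ _) _.
apply: ler_sum => j _.
have [pp sp] := Hproj (rshift M i) (rshift M j).
apply: (@proj_le1 _ _ _ _ nrmC).
  by rewrite starD starN star1' sp.
by rewrite mulrBr mulr1 mulrBl mul1r pp subrr subr0.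
Qed.
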